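(* Let $R=\bigoplus_{s\in S}R_s$ be an $S$-graded ring inducing $S$ with $S$ cancellative. Then $R$ is graded von Neumann regular if and only if $R$ is nearly epsilon-strongly graded and $R_e$ is a von Neumann regular ring for every idempotent $e\in S$.
   Context: Rings are associative, not necessarily unital. $S$-graded ring inducing $S$: $S$ a partial groupoid, $R=\bigoplus_{s\in S}R_s$ with additive subgroups, $R_sR_t\subseteq R_{st}$ when $st$ defined, $R_sR_t\ne0$ implies $st$ defined. Convention: $0\in S$, $R_0=0$, $S\setminus\{0\}=\{s:R_s\ne0\}$, undefined products set to $0$, $0$ absorbing. $H_R=\bigcup_sR_s$. $S$ cancellative: $0\ne su=tu$ or $0\ne us=ut$ implies $s=t$. $I(S)$: idempotents. (LRI): for every $s\in S$ there exist $s^{-1}\in S$, $e,f\in I(S)$ with $es=sf=s$, $fs^{-1}=s^{-1}e=s^{-1}$, $ss^{-1}=e$, $s^{-1}s=f$. $R_sR_t$ denotes the additive subgroup generated by products. $R$ is nearly epsilon-strongly graded if $S$ satisfies (LRI) and for every $s$ and $x\in R_s$ there exist $\epsilon(x)\in R_sR_{s^{-1}}$, $\epsilon'(x)\in R_{s^{-1}}R_s$ with $\epsilon(x)x=x=x\epsilon'(x)$. $R$ is graded von Neumann regular if $x\in xRx$ for all $x\in H_R$. *)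

(* Defs.v *)
From HB Require Import structures.
From mathcomp Require Import all_boot all_order all_algebra.
Set Implicit Arguments. Unset Strict Implicit. Unset Printing Implicit Defensive.
Import GRing.Theory.
Local Open Scope ring_scope.

Definition nu_ring (V : zmodType) (mul : V -> V -> V) : Prop :=
  associative mul /\ left_distributive mul +%R /\ right_distributive mul +%R.

Definition is_subgroup (V : zmodType) (A : {pred V}) : Prop :=
  0 \in A /\ forall x y, x \in A -> y \in A -> x - y \in A.

(* S-graded ring R = (+)_{s in S} R_s inducing S, with the convention that
   z plays the role of 0 in S (undefined products are z, z absorbing, R_z = 0)
   and S \ {z} = {s | R_s <> 0}. *)
Definition graded_inducing (S : eqType) (op : S -> S -> S) (z : S)
    (V : zmodType) (mul : V -> V -> V) (Rg : S -> {pred V}) : Prop :=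
  (forall s, op z s = z /\ op s z = z) /\
  (forall s, is_subgroup (Rg s)) /\
  (forall x, x \in Rg z -> x = 0) /\
  (forall s, s != z -> exists2 x, x \in Rg s & x != 0) /\
  (forall s t x y, x \in Rg s -> y \in Rg t -> mul x y \in Rg (op s t)) /\
      (forall x, exists l : seq (S * V),
          (forall p, p \in l -> p.2 \in Rg p.1) /\ x = \sum_(p <- l) p.2) /\
      (forall (l : seq S) (xs : S -> V), uniq l ->
          (forall s, s \in l -> xs s \in Rg s) ->
          \sum_(s <- l) xs s = 0 -> forall s, s \in l -> xs s = 0).

Definition cancellative (S : eqType) (op : S -> S -> S) (z : S) : Prop :=
  (forall s t u, op s u != z -> op s u = op t u -> s = t) /\
  (forall s t u, op u s != z -> op u s = op u t -> s = t).

Definition idem (S : Type) (op : S -> S -> S) (e : S) : Prop := op e e = e.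

Definition lri_inv (S : Type) (op : S -> S -> S) (s s' : S) : Prop :=
  exists e f, idem op e /\ idem op f /\ op e s = s /\ op s f = s /\
              op f s' = s' /\ op s' e = s' /\ op s s' = e /\ op s' s = f.

Definition LRI (S : Type) (op : S -> S -> S) : Prop :=
  forall s, exists s', lri_inv op s s'.

(* R_s R_t : the additive subgroup generated by products a b, a in A, b in B. *)
Definition prod_subgroup (V : zmodType) (mul : V -> V -> V) (A B : {pred V})
    (y : V) : Prop :=
  forall P : {pred V}, is_subgroup P ->
    (forall a b, a \in A -> b \in B -> mul a b \in P) -> y \in P.

Definition nearly_epsilon_strongly_graded (S : eqType) (op : S -> S -> S)
    (V : zmodType) (mul : V -> V -> V) (Rg : S -> {pred V}) : Prop :=
  LRI op /\
  forall s, exists s', lri_inv op s s' /\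
    forall x, x \in Rg s ->
      exists eps eps',
        [/\ prod_subgroup mul (Rg s) (Rg s') eps,
            prod_subgroup mul (Rg s') (Rg s) eps',
            mul eps x = x & mul x eps' = x].

Definition graded_vnr (S : Type) (V : zmodType) (mul : V -> V -> V)
    (Rg : S -> {pred V}) : Prop :=
  forall s x, x \in Rg s -> exists r, x = mul (mul x r) x.

Definition vnr_ring (V : zmodType) (mul : V -> V -> V) (A : {pred V}) : Prop :=
  forall x, x \in A -> exists2 y, y \in A & x = mul (mul x y) x.

(* Main.v *)
Require Import Defs.
From mathcomp Require Import all_boot all_order all_algebra.
From Stdlib Require ClassicalEpsilon.
Set Implicit Arguments. Unset Strict Implicit. Unset Printing Implicit Defensive.
Import GRing.Theory.
Local Open Scope ring_scope.

Section Aux.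
Variables (S : eqType) (op : S -> S -> S) (z : S) (V : zmodType)
  (mul : V -> V -> V) (Rg : S -> {pred V}).
Hypothesis hR : nu_ring mul.
Hypothesis hgr : graded_inducing op z mul Rg.
Hypothesis hcanc : cancellative op z.

Lemma mA a b c : mul a (mul b c) = mul (mul a b) c.
Proof. by case: hR => h _; apply: h. Qed.
Lemma mDl a b c : mul (a + b) c = mul a c + mul b c.
Proof. by case: hR => _ [h _]; apply: h. Qed.
Lemma mDr a b c : mul a (b + c) = mul a b + mul a c.
Proof. by case: hR => _ [_ h]; apply: h. Qed.
Lemma m0l c : mul 0 c = 0.
Proof. have h := mDl 0 0 c; rewrite addr0 in h.
by apply: (addrI (mul 0 c)); rewrite -h addr0. Qed.
Lemma m0r c : mul c 0 = 0.
Proof. have h := mDr c 0 0; rewrite addr0 in h.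
by apply: (addrI (mul c 0)); rewrite -h addr0. Qed.
Lemma mNl a c : mul (- a) c = - mul a c.
Proof. by apply/eqP; rewrite -addr_eq0 -mDl addNr m0l. Qed.
Lemma mNr a c : mul c (- a) = - mul c a.
Proof. by apply/eqP; rewrite -addr_eq0 -mDr addNr m0r. Qed.
Lemma mBl a b c : mul (a - b) c = mul a c - mul b c.
Proof. by rewrite mDl mNl. Qed.
Lemma mBr a b c : mul c (a - b) = mul c a - mul c b.
Proof. by rewrite mDr mNr. Qed.
Lemma msuml I (r : seq I) (P : pred I) F c :
  mul (\sum_(i <- r | P i) F i) c = \sum_(i <- r | P i) mul (F i) c.
Proof. exact: (big_morph (fun a => mul a c) (fun a b => mDl a b c) (m0l c)). Qed.
Lemma msumr I (r : seq I) (P : pred I) F c :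
  mul c (\sum_(i <- r | P i) F i) = \sum_(i <- r | P i) mul c (F i).
Proof. exact: (big_morph (fun a => mul c a) (fun a b => mDr c a b) (m0r c)). Qed.

Lemma g0 s : 0 \in Rg s.
Proof. by case: hgr => _ [h _]; case: (h s). Qed.
Lemma gB s a b : a \in Rg s -> b \in Rg s -> a - b \in Rg s.
Proof. by case: hgr => _ [h _]; case: (h s) => _; apply. Qed.
Lemma gN s a : a \in Rg s -> - a \in Rg s.
Proof. by move=> ha; rewrite -sub0r gB ?g0. Qed.
Lemma gD s a b : a \in Rg s -> b \in Rg s -> a + b \in Rg s.
Proof. by move=> ha hb; rewrite -(opprK b) gB ?gN. Qed.
Lemma gM s t a b : a \in Rg s -> b \in Rg t -> mul a b \in Rg (op s t).
Proof. case: hgr => _ [_ [_ [_ [h _]]]]; exact: h. Qed.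
Lemma gz a : a \in Rg z -> a = 0.
Proof. by move=> ha; case: hgr => _ [_ [h _]]; apply: h. Qed.
Lemma opz s : op z s = z /\ op s z = z.
Proof. by case: hgr => h _; apply: h. Qed.
Lemma gsum (I : eqType) (r : seq I) (P : pred I) (F : I -> V) (s : S) :
  (forall i, i \in r -> P i -> F i \in Rg s) -> \sum_(i <- r | P i) F i \in Rg s.
Proof.
move=> h; rewrite big_seq_cond; apply: (big_ind (fun a => a \in Rg s)).
- exact: g0.
- by move=> ??; apply: gD.
by move=> i /andP[]; apply: h.
Qed.

Lemma dir (l : seq S) (xs : S -> V) : uniq l ->
  (forall s, s \in l -> xs s \in Rg s) ->
  \sum_(s <- l) xs s = 0 -> forall s, s \in l -> xs s = 0.
Proof. by case: hgr => _ [_ [_ [_ [_ [_ h]]]]]; exact: h. Qed.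

Lemma deg_uniq a b x : x \in Rg a -> x \in Rg b -> x != 0 -> a = b.
Proof.
move=> ha hb nx; case: (eqVneq a b) => // nab; exfalso.
have := @dir [:: a; b] (fun u => if u == a then x else - x).
have u : uniq [:: a; b] by rewrite /= inE nab.
move=> /(_ u) h.
have hm : forall s, s \in [:: a; b] -> (if s == a then x else - x) \in Rg s.
  move=> s; rewrite !inE => /orP[]/eqP->; rewrite ?eqxx //.
  by rewrite eq_sym (negbTE nab) gN.
have hs : \sum_(s <- [:: a; b]) (if s == a then x else - x) = 0.
  by rewrite big_cons big_seq1 eqxx eq_sym (negbTE nab) subrr.
have := h hm hs a (mem_head _ _); rewrite eqxx => x0.
by move: nx; rewrite x0 eqxx.
Qed.

Lemma comp (l : seq (S * V)) w s : w \in Rg s ->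
  (forall p, p \in l -> p.2 \in Rg p.1) -> w = \sum_(p <- l) p.2 ->
  w = \sum_(p <- l | p.1 == s) p.2.
Proof.
move=> hw hl hsum.
set L := undup (s :: map fst l).
have uL : uniq L := undup_uniq _.
have sL : s \in L by rewrite mem_undup mem_head.
have pL : forall p, p \in l -> p.1 \in L.
  by move=> p hp; rewrite mem_undup inE (map_f fst hp) orbT.
pose xs u := \sum_(p <- l | p.1 == u) p.2 - (if u == s then w else 0).
have hm : forall u, u \in L -> xs u \in Rg u.
  move=> u _; apply: gB.
  - by apply: gsum => p hp /eqP <-; exact: hl.
  - by case: eqP => [->|_] //; exact: g0.
have hs : \sum_(u <- L) xs u = 0.
  rewrite sumrB.
  have -> : \sum_(u <- L) (if u == s then w else 0) = w.
    by rewrite -big_mkcond /= -big_filter filter_pred1_uniq // big_seq1.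
  have -> : \sum_(u <- L) \sum_(p <- l | p.1 == u) p.2 = \sum_(p <- l) p.2.
    under eq_bigr => u _ do rewrite big_mkcond.
    rewrite exchange_big /= big_seq [RHS]big_seq; apply: eq_bigr => p hp.
    rewrite -big_mkcond /= (eq_bigl (fun u => u == p.1)); last by move=> u; rewrite eq_sym.
    by rewrite -big_filter filter_pred1_uniq ?pL // big_seq1.
  by rewrite -hsum subrr.
have := dir uL hm hs sL; rewrite /xs eqxx => /eqP; rewrite subr_eq0 => /eqP.
by [].
Qed.

Lemma canc2 s a b : s != z -> op (op s a) s = s -> op (op s b) s = s -> a = b.
Proof.
move=> sz ea eb; case: hcanc => c1 c2.
have e : op s a = op s b.
  by apply: (c1 _ _ s); rewrite ?ea ?eb.
apply: (c2 _ _ s) => //; apply/eqP => h; move: ea; rewrite h (opz s).1 => /esym/eqP.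
by rewrite (negbTE sz).
Qed.

Lemma snz s x : x \in Rg s -> x != 0 -> s != z.
Proof. by move=> hx nx; apply/eqP => e; move: hx nx; rewrite e => /gz ->; rewrite eqxx. Qed.

Lemma homog s x r : x \in Rg s -> x != 0 -> x = mul (mul x r) x ->
  exists t y, y \in Rg t /\ x = mul (mul x y) x.
Proof.
move=> hx nx hr.
have [l [hl er]] : exists l : seq (S * V),
    (forall p, p \in l -> p.2 \in Rg p.1) /\ r = \sum_(p <- l) p.2.
  by case: hgr => _ [_ [_ [_ [_ [h _]]]]]; apply: h.
have sz := snz hx nx.
pose l2 := map (fun p => (op (op s p.1) s, mul (mul x p.2) x)) l.
have h2 : x = \sum_(q <- l2) q.2.
  by rewrite big_map /= {1}hr er msumr msuml.
have hl2 : forall q, q \in l2 -> q.2 \in Rg q.1.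
  by move=> q /mapP [p hp ->] /=; apply: gM => //; apply: gM => //; apply: hl.
have := comp hx hl2 h2; rewrite big_map /= => hx2.
case: (boolP (has (fun p => op (op s p.1) s == s) l)) => [/hasP [p0 hp0 /eqP e0] | hn].
  exists p0.1, (\sum_(p <- l | op (op s p.1) s == s) p.2); split.
    apply: gsum => p hp /eqP e.
    by rewrite -(canc2 sz e e0); apply: hl.
  by rewrite msumr msuml.
exfalso; move: nx; rewrite hx2 big1_seq ?eqxx // => p /andP [hp hin].
by move/hasPn: hn => /(_ p hin); rewrite hp.
Qed.

Lemma red x y w : mul (mul x y) x = x -> mul (mul (mul w x) y) x = mul w x.
Proof. by move=> h; rewrite -!mA [mul x (mul y x)]mA h. Qed.

Lemma dnz a b x : x \in Rg a -> x \in Rg b -> x != 0 -> a = b.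
Proof. exact: deg_uniq. Qed.

Lemma fwd_s : graded_vnr mul Rg -> forall s, exists s', lri_inv op s s' /\
    forall x, x \in Rg s ->
      exists eps eps',
        [/\ prod_subgroup mul (Rg s) (Rg s') eps,
            prod_subgroup mul (Rg s') (Rg s) eps',
            mul eps x = x & mul x eps' = x].
Proof.
move=> hv s.
case: (eqVneq s z) => [->|sz].
  exists z; split.
    exists z, z; rewrite /idem !(opz z).1; do !split.
  move=> x /gz ->; exists 0, 0; split; rewrite ?m0l //;
    by move=> P [h0 _] _.
have [x0 hx0 nx0] : exists2 x, x \in Rg s & x != 0.
  by case: hgr => _ [_ [_ [h _]]]; apply: h.
have [r hr] := hv _ _ hx0.
have [t [y0 [hy0 e0]]] := homog hx0 nx0 hr.
have hxy := esym e0.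
have ets : op (op s t) s = s.
  by apply: (dnz _ hx0 nx0); rewrite {1}e0; apply: gM => //; apply: gM.
have ha : mul x0 y0 \in Rg (op s t) by apply: gM.
have hb : mul y0 x0 \in Rg (op t s) by apply: gM.
have hy' : mul (mul y0 x0) y0 \in Rg (op (op t s) t) by apply: gM.
have na : mul x0 y0 != 0.
  by apply: contra nx0 => /eqP h; rewrite {1}e0 h m0l.
have nb : mul y0 x0 != 0.
  by apply: contra nx0 => /eqP h; rewrite {1}e0 -mA h m0r.
have ny : mul (mul y0 x0) y0 != 0.
  apply: contra nx0 => /eqP h; apply/eqP.
  have -> : x0 = mul (mul x0 (mul (mul y0 x0) y0)) x0.
    by rewrite !mA hxy hxy.
  by rewrite h m0r m0l.
exists (op (op t s) t); split.
  exists (op s t), (op t s); rewrite /idem; do !split.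
  - apply: esym; apply: (dnz ha) na; have <- : mul (mul x0 y0) (mul x0 y0) = mul x0 y0.
      by rewrite !mA hxy.
    by apply: gM.
  - apply: esym; apply: (dnz hb) nb; have <- : mul (mul y0 x0) (mul y0 x0) = mul y0 x0.
      by rewrite !mA (red _ hxy).
    by apply: gM.
  - by [].
  - apply: esym; apply: (dnz hx0) nx0; rewrite {1}e0 -mA; apply: gM => //.
  - apply: esym; apply: (dnz hy') ny; have <- : mul (mul y0 x0) (mul (mul y0 x0) y0) = mul (mul y0 x0) y0.
      by rewrite !mA (red _ hxy).
    by apply: gM.
  - apply: esym; apply: (dnz hy') ny; have <- : mul (mul (mul y0 x0) y0) (mul x0 y0) = mul (mul y0 x0) y0.
      by rewrite !mA (red _ hxy).
    by apply: gM.
  - apply: esym; apply: (dnz ha) na; have <- : mul x0 (mul (mul y0 x0) y0) = mul x0 y0.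
      by rewrite !mA hxy.
    by apply: gM.
  - apply: esym; apply: (dnz hb) nb; have <- : mul (mul (mul y0 x0) y0) x0 = mul y0 x0.
      by rewrite (red _ hxy).
    by apply: gM.
move=> x hx.
case: (eqVneq x 0) => [->|nx].
  exists 0, 0; split; rewrite ?m0l //; by move=> P [h0 _] _.
have [r' hr'] := hv _ _ hx.
have [u [y [hy e1]]] := homog hx nx hr'.
have hxy1 := esym e1.
have eus : op (op s u) s = s.
  by apply: (dnz _ hx nx); rewrite {1}e1; apply: gM => //; apply: gM.
have ut := canc2 sz eus ets.
rewrite ut in hy.
have hy1 : mul (mul y x) y \in Rg (op (op t s) t) by apply: gM => //; apply: gM.
exists (mul x (mul (mul y x) y)), (mul (mul (mul y x) y) x); split.
- by move=> P _ hP; apply: hP.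
- by move=> P _ hP; apply: hP.
- by rewrite !mA hxy1 hxy1.
- by rewrite !mA hxy1 hxy1.
Qed.

Lemma fwd_e : graded_vnr mul Rg -> forall e, idem op e -> vnr_ring mul (Rg e).
Proof.
move=> hv e he x hx.
case: (eqVneq x 0) => [->|nx].
  by exists 0; rewrite ?g0 ?m0l.
have [r hr] := hv _ _ hx.
have [u [y [hy e1]]] := homog hx nx hr.
have sz := snz hx nx.
have eus : op (op e u) e = e.
  by apply: (dnz _ hx nx); rewrite {1}e1; apply: gM => //; apply: gM.
have eee : op (op e e) e = e by rewrite he he.
by exists y => //; rewrite (canc2 sz eus eee) in hy.
Qed.

Definition asb (Q : Prop) : bool :=
  if ClassicalEpsilon.excluded_middle_informative Q then true else false.
Lemma asbP Q : asb Q <-> Q.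
Proof. by rewrite /asb; case: ClassicalEpsilon.excluded_middle_informative. Qed.

Lemma bwd : nearly_epsilon_strongly_graded op mul Rg ->
  (forall e, idem op e -> vnr_ring mul (Rg e)) -> graded_vnr mul Rg.
Proof.
move=> [_ hn] hvn s x hx.
have [s' [[e [f [he [hf [es [sf [fs' [s'e [ss' s's]]]]]]]]] hx']] := hn s.
have [eps [eps' [_ heps' _ xe]]] := hx' x hx.
have vn := hvn e he.
pose Q w := forall b, b \in Rg s' -> exists b', b' \in Rg s' /\
   mul (mul x b') (mul x w) = mul x w /\
   forall v, mul (mul x b) v = v -> mul (mul x b') v = v.
pose P : {pred V} := [pred w | asb (Q w)].
have PQ w : w \in P <-> Q w by rewrite inE; apply: asbP.
have : eps' \in P.
  apply: heps'.
    split.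
      apply/PQ => b hb; exists b; split => //; split => //.
      by rewrite !m0r.
    move=> w1 w2 /PQ h1 /PQ h2; apply/PQ => b hb.
    have [b1 [hb1 [f1 p1]]] := h1 b hb.
    have [b2 [hb2 [f2 p2]]] := h2 b1 hb1.
    exists b2; split => //; split; last by move=> v /p1 /p2.
    by rewrite !mBr f2 (p2 _ f1).
  move=> a c ha hc; apply/PQ => b hb.
  pose cc := mul x a.
  have hcc : cc \in Rg e by rewrite -ss'; apply: gM.
  pose g := mul x b.
  have hg : g \in Rg e by rewrite -ss'; apply: gM.
  pose d := a - mul b cc.
  have hd : d \in Rg s'.
    by apply: gB => //; rewrite -s'e; apply: gM.
  have hc' : mul x d \in Rg e by rewrite -ss'; apply: gM.
  have [y hy ey] := vn _ hc'.
  have hdy : mul d y \in Rg s' by rewrite -s'e; apply: gM.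
  exists (mul d y - mul (mul d y) g + b); split.
    by apply: gD => //; apply: gB => //; rewrite -s'e; apply: gM.
  have key : mul x (mul d y - mul (mul d y) g + b) =
      mul (mul x d) y - mul (mul (mul x d) y) g + g.
    by rewrite mDr mBr !mA.
  have xd : mul x d = cc - mul g cc by rewrite mBr mA.
  have fixv : forall v, mul g v = v ->
      mul (mul x (mul d y - mul (mul d y) g + b)) v = v.
    move=> v hv; rewrite key mDl mBl hv -(mA _ g v) hv.
    by rewrite subrr add0r.
  split; last by move=> v; apply: fixv.
  rewrite [mul x (mul a c)]mA -/cc mA; congr (mul _ c).
  rewrite key mDl mBl -(mA _ g cc).
  rewrite -mBr -xd.
  by rewrite -ey xd subrK.
move=> /PQ /(_ 0 (g0 _)) [b' [_ [h _]]].
by exists b'; rewrite xe in h; rewrite h.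
Qed.

End Aux.

Theorem theorem4p10 (S : eqType) (op : S -> S -> S) (z : S)
    (V : zmodType) (mul : V -> V -> V) (Rg : S -> {pred V})
    (hR : nu_ring mul) (hgr : graded_inducing op z mul Rg)
    (hcanc : cancellative op z) :
  graded_vnr mul Rg <->
  (nearly_epsilon_strongly_graded op mul Rg /\
   forall e, idem op e -> vnr_ring mul (Rg e)).
Proof.
split.
  move=> hv; split; last exact: (fwd_e hR hgr hcanc hv).
  have h := fwd_s hR hgr hcanc hv.
  split; last exact: h.
  by move=> s; have [s' [hs _]] := h s; exists s'.
by move=> [hn hv]; apply: (bwd hR hgr hn hv).
Qed.
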